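(* Assume (V1), (V2), (V3), and (In). Then for every $n$, every $i=0,\dots,N_n-2$ and every $t\ge0$, $$t\,y^n_i(t)\,\big[v(y^n_{i+1}(t))-v(y^n_i(t))\big]\le\ell_n.$$
   Context: (V1): $v\in C^1([0,\infty))$ strictly decreasing; (V2): $v(0)=v_{\max}\in\mathbb{R}$; (V3): $\rho\mapsto\rho\,v'(\rho)$ is non-increasing on $[0,\infty)$. $\mathcal{M}_L$: nonnegative compactly supported Radon measures on $\mathbb{R}$ of mass $L>0$. (In): $\bar\rho\in\mathcal{M}_L\cap L^\infty(\mathbb{R})$; $\bar x_{\min}:=\min\mathrm{supp}\,\bar\rho$. For $n\in\mathbb{N}$: $N_n=2^n$, $\ell_n=2^{-n}L$, $\bar x^n_0=\bar x_{\min}$, $\bar x^n_i=\sup\{x:\int_{\bar x^n_{i-1}}^x\bar\rho<\ell_n\}$; $(x^n_i(t))$ solves $\dot x^n_{N_n}=v_{\max}$, $\dot x^n_i=v(\ell_n/(x^n_{i+1}-x^n_i))$, $x^n_i(0)=\bar x^n_i$; $y^n_i(t):=\ell_n/(x^n_{i+1}(t)-x^n_i(t))$, $i=0,\dots,N_n-1$. *)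

(* Defs.v *)
From Stdlib Require Import Reals Lra Lia.
Open Scope R_scope.

(* (V1): v is C^1 on [0,oo) (derivative v' taken within [0,oo), so one-sided
   at 0) and strictly decreasing on [0,oo). *)
Definition deriv_within_nonneg (v v' : R -> R) : Prop :=
  forall r, 0 <= r ->
    forall eps, 0 < eps -> exists delta, 0 < delta /\
      forall s, 0 <= s -> s <> r -> Rabs (s - r) < delta ->
        Rabs ((v s - v r) / (s - r) - v' r) < eps.

Definition cont_within_nonneg (f : R -> R) : Prop :=
  forall r, 0 <= r ->
    forall eps, 0 < eps -> exists delta, 0 < delta /\
      forall s, 0 <= s -> Rabs (s - r) < delta -> Rabs (f s - f r) < eps.

Definition V1 (v v' : R -> R) : Prop :=
  deriv_within_nonneg v v' /\ cont_within_nonneg v' /\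
  (forall a b, 0 <= a -> a < b -> v b < v a).

Definition V2 (v : R -> R) (vmax : R) : Prop := v 0 = vmax.

Definition V3 (v' : R -> R) : Prop :=
  forall a b, 0 <= a -> a <= b -> b * v' b <= a * v' a.

(* (In): the initial datum rhobar is encoded by its cumulative distribution
   function F x = int_{-oo}^x rhobar.
   rhobar >= 0           <-> F non-decreasing
   rhobar in L^oo        <-> F Lipschitz
   compact support, mass L <-> F = 0 left of some a, F = L right of some b. *)
Definition In_cdf (F : R -> R) (L : R) : Prop :=
  0 < L /\
  (forall x y, x <= y -> F x <= F y) /\
  (exists M, forall x y, Rabs (F x - F y) <= M * Rabs (x - y)) /\
  (exists a b, a <= b /\ (forall x, x <= a -> F x = 0) /\
                         (forall x, b <= x -> F x = L)).

Definition is_min_supp (F : R -> R) (xmin : R) : Prop :=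
  F xmin = 0 /\ forall x, xmin < x -> 0 < F x.

Definition Nn (n : nat) : nat := (2 ^ n)%nat.
Definition elln (L : R) (n : nat) : R := L / 2 ^ n.

Definition initial_positions (F : R -> R) (L xmin : R) (n : nat)
    (xb : nat -> R) : Prop :=
  xb 0%nat = xmin /\
  forall i, (1 <= i <= Nn n)%nat ->
    is_lub (fun x => F x - F (xb (i - 1)%nat) < elln L n) (xb i).

Definition ydens (L : R) (n : nat) (x : nat -> R -> R) (i : nat) (t : R) : R :=
  elln L n / (x (S i) t - x i t).

(* (x_i)_{i=0..N_n} is a (classical) solution on [0,oo) of the FtL system
   dx_N/dt = vmax, dx_i/dt = v(l_n/(x_{i+1}-x_i)), x_i(0) = xb_i;
   the right-hand side is only defined for ordered particles, so
   x_i(t) < x_{i+1}(t) is part of being a solution. *)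
Definition FtL_solution (v : R -> R) (vmax L : R) (n : nat)
    (xb : nat -> R) (x : nat -> R -> R) : Prop :=
  (forall i, (i <= Nn n)%nat -> x i 0 = xb i) /\
  (forall i, (i < Nn n)%nat -> forall t, 0 <= t -> x i t < x (S i) t) /\
  (forall i, (i <= Nn n)%nat ->
     forall eps, 0 < eps -> exists delta, 0 < delta /\
       forall t, 0 <= t < delta -> Rabs (x i t - x i 0) < eps) /\
  (forall t, 0 < t -> derivable_pt_lim (x (Nn n)) t vmax) /\
  (forall i, (i < Nn n)%nat -> forall t, 0 < t ->
     derivable_pt_lim (x i) t (v (ydens L n x i t))).

(* Main.v *)
Require Import Defs.
From Stdlib Require Import Reals Lra Lia FunctionalExtensionality.
Open Scope R_scope.

Lemma dpl_ext (f g : R -> R) x l : (forall t, f t = g t) ->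
  derivable_pt_lim f x l -> derivable_pt_lim g x l.
Proof. intros H. replace g with f by (apply functional_extensionality; auto). auto. Qed.

Definition Vf (v : R -> R) vmax L n (x : nat -> R -> R) k t :=
  if (k <? Nn n)%nat then v (ydens L n x k t) else vmax.
Definition gap (x : nat -> R -> R) k t := x (S k) t - x k t.
Definition dyf v vmax L n x k t :=
  (0 * gap x k t - (Vf v vmax L n x (S k) t - Vf v vmax L n x k t) * elln L n) / (gap x k t)².
Definition dVf v v' vmax L n x k t :=
  if (k <? Nn n)%nat then v' (ydens L n x k t) * dyf v vmax L n x k t else 0.

Lemma dx_lem v vmax L n xb x : FtL_solution v vmax L n xb x ->
  forall k t, (k <= Nn n)%nat -> 0 < t -> derivable_pt_lim (x k) t (Vf v vmax L n x k t).
Proof.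
  intros [_ [_ [_ [HN Hi]]]] k t Hk Ht. unfold Vf.
  destruct (Nat.ltb_spec k (Nn n)).
  - apply Hi; auto.
  - replace k with (Nn n) by lia. apply HN; auto.
Qed.

Lemma dy_lem v vmax L n xb x : FtL_solution v vmax L n xb x ->
  forall k t, (k < Nn n)%nat -> 0 < t ->
  derivable_pt_lim (ydens L n x k) t (dyf v vmax L n x k t).
Proof.
  intros H k t Hk Ht.
  assert (Hg : gap x k t <> 0).
  { destruct H as [_ [Ho _]]. unfold gap. specialize (Ho k Hk t ltac:(lra)). lra. }
  apply dpl_ext with (f := (fct_cte (elln L n) / (x (S k) - x k))%F).
  { intros s. reflexivity. }
  apply derivable_pt_lim_div; [apply derivable_pt_lim_const| |exact Hg].
  apply derivable_pt_lim_minus; apply (dx_lem _ _ _ _ _ _ H); lia || auto.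
Qed.
Lemma cmp_lemma (w dw : R -> R) (l : R) : 0 < l ->
  (forall t, 0 < t -> derivable_pt_lim w t (dw t)) ->
  (forall t, 0 < t -> l <= w t -> dw t <= 0) ->
  (exists delta, 0 < delta /\ forall s, 0 < s < delta -> w s < l) ->
  forall t, 0 < t -> w t <= l.
Proof.
  intros Hl Hd Hneg [delta [Hdp Hsm]] t1 Ht1.
  destruct (Rle_or_lt (w t1) l) as [H|H]; [exact H|exfalso].
  set (S := fun s => 0 < s <= t1 /\ w s <= l).
  assert (Hb : bound S) by (exists t1; intros s [? ?]; lra).
  set (s0 := Rmin (delta/2) t1).
  assert (Hs0 : 0 < s0 /\ s0 <= t1 /\ s0 < delta).
  { unfold s0; split; [apply Rmin_glb_lt; lra|split];
      [apply Rmin_r| eapply Rle_lt_trans; [apply Rmin_l|lra]]. }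
  assert (HS0 : S s0).
  { split; [lra|]. left; apply Hsm; lra. }
  destruct (completeness S Hb (ex_intro _ s0 HS0)) as [t0 [Hub Hlub]].
  assert (Ht0a : s0 <= t0) by (apply Hub; auto).
  assert (Ht0b : t0 <= t1) by (apply Hlub; intros s [? ?]; lra).
  assert (Hw0 : w t0 <= l).
  { destruct (Rle_or_lt (w t0) l) as [h|h]; [exact h|exfalso].
    assert (Hc : continuity_pt w t0).
    { apply derivable_continuous_pt. exists (dw t0). apply Hd. lra. }
    destruct (Hc (w t0 - l)) as [alp [Halp Hc2]]; [lra|].
    assert (t0 <= t0 - alp); [|lra].
    apply Hlub. intros s [Hs1 Hs2].
    assert (s <= t0) by (apply Hub; split; auto).
    destruct (Rle_or_lt s (t0 - alp)) as [h2|h2]; [exact h2|exfalso].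
    destruct (Req_dec s t0) as [->|hne]; [lra|].
    assert (Rabs (w s - w t0) < w t0 - l).
    { apply Hc2. split. split. exact I. auto. simpl. unfold R_dist.
      rewrite Rabs_left1; lra. }
    apply Rabs_def2 in H1. lra. }
  assert (Hlt : t0 < t1) by (destruct Ht0b; [auto| subst; lra]).
  destruct (MVT_cor2 w dw t0 t1 Hlt) as [c [Heq Hc]].
  { intros c Hc. apply Hd. lra. }
  assert (dw c <= 0).
  { apply Hneg; [lra|].
    destruct (Rle_or_lt l (w c)) as [h|h]; [exact h|].
    assert (c <= t0); [apply Hub; split; lra| lra]. }
  assert (dw c * (t1 - t0) <= 0).
  { rewrite <- (Rmult_0_l (t1 - t0)); apply Rmult_le_compat_r; lra. }
  lra.
Qed.
Lemma v_deriv (v v' : R -> R) r : V1 v v' -> 0 < r -> derivable_pt_lim v r (v' r).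
Proof.
  intros [Hd _] Hr eps Heps.
  destruct (Hd r (Rlt_le _ _ Hr) eps Heps) as [d [Hd0 Hd1]].
  assert (Hm : 0 < Rmin d r) by (apply Rmin_glb_lt; lra).
  exists (mkposreal _ Hm). intros h Hh0 Hh. simpl in Hh.
  assert (Rabs h < d) by (eapply Rlt_le_trans; [exact Hh| apply Rmin_l]).
  assert (Rabs h < r) by (eapply Rlt_le_trans; [exact Hh| apply Rmin_r]).
  replace h with ((r + h) - r) at 2 by ring.
  apply Hd1.
  - apply Rabs_def2 in H0. lra.
  - lra.
  - replace (r + h - r) with h by ring. auto.
Qed.

Lemma v_anti (v v' : R -> R) a b : V1 v v' -> 0 <= a -> a <= b -> v b <= v a.
Proof.
  intros [_ [_ H]] Ha Hab. destruct Hab as [h| <-]; [left; apply H; auto| lra].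
Qed.

Lemma vp_nonpos (v v' : R -> R) r : V1 v v' -> 0 <= r -> v' r <= 0.
Proof.
  intros HV Hr. destruct (Rle_or_lt (v' r) 0) as [h|h]; [auto|exfalso].
  destruct HV as [Hd [_ Hm]].
  destruct (Hd r Hr (v' r) h) as [d [Hd0 Hd1]].
  set (s := r + d/2).
  assert (Hq := Hd1 s ltac:(unfold s; lra) ltac:(unfold s; lra)
     ltac:(unfold s; rewrite Rabs_right; lra)).
  assert (Hvs : v s < v r) by (apply Hm; unfold s; lra).
  assert (Hs : s - r > 0) by (unfold s; lra).
  assert ((v s - v r) / (s - r) < 0).
  { apply Rdiv_neg_pos; lra. }
  apply Rabs_def2 in Hq. lra.
Qed.

Lemma ypos L n x k t : 0 < L -> x k t < x (S k) t -> 0 < ydens L n x k t.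
Proof. intros HL H. unfold ydens, elln. apply Rdiv_lt_0_compat; [|lra].
  apply Rdiv_lt_0_compat; [lra| apply pow_lt; lra]. Qed.

Lemma dV_lem v v' vmax L n xb x : V1 v v' -> 0 < L -> FtL_solution v vmax L n xb x ->
  forall k t, (k <= Nn n)%nat -> 0 < t ->
  derivable_pt_lim (Vf v vmax L n x k) t (dVf v v' vmax L n x k t).
Proof.
  intros HV HL H k t Hk Ht. unfold dVf.
  destruct (Nat.ltb_spec k (Nn n)).
  - apply dpl_ext with (f := comp v (ydens L n x k)).
    { intros s. unfold Vf, comp. destruct (Nat.ltb_spec k (Nn n)); [reflexivity|lia]. }
    apply derivable_pt_lim_comp. apply (dy_lem _ _ _ _ _ _ H); auto.
    apply v_deriv; auto. apply ypos; auto. destruct H as [_ [Ho _]]. apply Ho; auto; lra.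
  - apply dpl_ext with (f := fct_cte vmax).
    { intros s. unfold Vf, fct_cte. destruct (Nat.ltb_spec k (Nn n)); [lia|reflexivity]. }
    apply derivable_pt_lim_const.
Qed.
Lemma alg1 l t G u va d2 : 0 < l -> 0 < G ->
  l * ((1*(l/G) + t*((0*G - u*l)/G²)) * u + (t*(l/G)) * (d2 - va*((0*G - u*l)/G²)))
  = (l/G)*u*(l - t*(l/G)*u) + (l/G)*(((l/G)*va)*(t*(l/G)*u)) + l*t*(l/G)*d2.
Proof. intros. unfold Rsqr. field. lra. Qed.
Lemma alg2 l t G G' u' vb : 0 < l -> 0 < G -> 0 < G' ->
  l*t*(l/G)*(vb*((0*G'-u'*l)/G'²)) = -(l/G)*(((l/G')*vb)*(t*(l/G')*u')).
Proof. intros. unfold Rsqr. field. lra. Qed.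
Lemma sign1 l t a u P Q T : 0<l -> 0<t -> 0<a -> l <= t*a*u -> P <= Q -> Q <= 0 -> T <= l ->
  a*u*(l - t*a*u) + a*(P*(t*a*u) - Q*T) <= 0.
Proof.
  intros. assert (0 < u).
  { destruct (Rle_or_lt u 0); auto. assert (t*a*u <= 0); [|lra].
    rewrite <- (Rmult_0_r (t*a)). apply Rmult_le_compat_l; nra. }
  set (W := t*a*u) in *.
  assert (0 < a*u) by (apply Rmult_lt_0_compat; lra).
  assert (a*u*(l-W) <= 0) by (rewrite <- (Rmult_0_r (a*u)); apply Rmult_le_compat_l; lra).
  assert (0 < W) by lra.
  assert (P*W <= Q*W) by (apply Rmult_le_compat_r; lra).
  assert (Q*W <= Q*l) by nra.
  assert (Q*l <= Q*T) by nra.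
  nra.
Qed.

Definition wf v vmax L n x j t :=
  t * ydens L n x j t * (Vf v vmax L n x (S j) t - Vf v vmax L n x j t).
Definition dwf v v' vmax L n x j t :=
  (1 * ydens L n x j t + t * dyf v vmax L n x j t) *
    (Vf v vmax L n x (S j) t - Vf v vmax L n x j t) +
  (t * ydens L n x j t) * (dVf v v' vmax L n x (S j) t - dVf v v' vmax L n x j t).

Lemma dw_lem v v' vmax L n xb x : V1 v v' -> 0 < L -> FtL_solution v vmax L n xb x ->
  forall j t, (j < Nn n)%nat -> 0 < t ->
  derivable_pt_lim (wf v vmax L n x j) t (dwf v v' vmax L n x j t).
Proof.
  intros HV HL H j t Hj Ht.
  apply dpl_ext with (f := ((id * ydens L n x j) *
     (Vf v vmax L n x (S j) - Vf v vmax L n x j))%F).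
  { intros s; reflexivity. }
  unfold dwf.
  apply (derivable_pt_lim_mult (id * ydens L n x j)%F
     (Vf v vmax L n x (S j) - Vf v vmax L n x j)%F t).
  - apply (derivable_pt_lim_mult id (ydens L n x j) t); [apply derivable_pt_lim_id|].
    apply (dy_lem _ _ _ _ _ _ H); auto.
  - apply derivable_pt_lim_minus; apply (dV_lem _ _ _ _ _ _ _ HV HL H); lia || auto.
Qed.

Lemma dw_sign v v' vmax L n xb x : V1 v v' -> V2 v vmax -> V3 v' -> 0 < L ->
  FtL_solution v vmax L n xb x ->
  forall j, (j < Nn n)%nat ->
  ((S j < Nn n)%nat -> forall t, 0 <= t -> wf v vmax L n x (S j) t <= elln L n) ->
  forall t, 0 < t -> elln L n <= wf v vmax L n x j t -> dwf v v' vmax L n x j t <= 0.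
Proof.
  intros HV HV2 HV3 HL H j Hj IH t Ht Hw.
  assert (Hl : 0 < elln L n) by (unfold elln; apply Rdiv_lt_0_compat; [lra|apply pow_lt; lra]).
  destruct H as [H0 [Ho Hrest]].
  assert (HG : 0 < gap x j t) by (unfold gap; specialize (Ho j Hj t ltac:(lra)); lra).
  assert (Hvj : Vf v vmax L n x j t = v (elln L n / gap x j t)).
  { unfold Vf. destruct (Nat.ltb_spec j (Nn n)); [reflexivity|lia]. }
  assert (Hdvj : dVf v v' vmax L n x j t = v' (elln L n / gap x j t) * dyf v vmax L n x j t).
  { unfold dVf. destruct (Nat.ltb_spec j (Nn n)); [reflexivity|lia]. }
  set (u := Vf v vmax L n x (S j) t - Vf v vmax L n x j t).
  set (l := elln L n) in *.
  set (G := gap x j t) in *.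
  set (a := l / G).
  assert (Ha : 0 < a) by (apply Rdiv_lt_0_compat; lra).
  assert (Hwa : wf v vmax L n x j t = t * a * u) by reflexivity.
  rewrite Hwa in Hw.
  assert (Hu : 0 < u).
  { destruct (Rle_or_lt u 0) as [h|h]; auto. assert (t*a*u <= 0); [|lra].
    rewrite <- (Rmult_0_r (t*a)). apply Rmult_le_compat_l; [|lra].
    apply Rmult_le_pos; lra. }
  assert (HP : a * v' a <= 0).
  { rewrite <- (Rmult_0_r a). apply Rmult_le_compat_l; [lra|]. apply (vp_nonpos v); auto; lra. }
  assert (E1 : l * dwf v v' vmax L n x j t = a*u*(l - t*a*u) + a*((a*v' a)*(t*a*u))
     + l*t*a*dVf v v' vmax L n x (S j) t).
  { unfold dwf. rewrite Hdvj. unfold dyf. fold G. fold l. fold u. unfold a.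
    apply alg1; auto. }
  assert (l * dwf v v' vmax L n x j t <= 0).
  { rewrite E1. unfold dVf at 1. destruct (Nat.ltb_spec (S j) (Nn n)) as [hs|hs].
    - assert (HG' : 0 < gap x (S j) t) by (unfold gap; specialize (Ho (S j) hs t ltac:(lra)); lra).
      set (G' := gap x (S j) t) in *.
      set (u' := Vf v vmax L n x (S (S j)) t - Vf v vmax L n x (S j) t).
      set (b := l / G').
      assert (Hb : 0 < b) by (apply Rdiv_lt_0_compat; lra).
      assert (E2 : l*t*a*(v' (ydens L n x (S j) t) * dyf v vmax L n x (S j) t)
                 = -a*((b*v' b)*(t*b*u'))).
      { unfold dyf. fold G'. fold l. fold u'. unfold a, b. apply alg2; auto. }
      rewrite E2.
      assert (HT : t*b*u' <= l) by (apply (IH hs t); lra).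
      assert (Hvsj : Vf v vmax L n x (S j) t = v b).
      { unfold Vf. destruct (Nat.ltb_spec (S j) (Nn n)); [reflexivity|lia]. }
      assert (Hba : b <= a).
      { destruct (Rle_or_lt b a) as [h|h]; auto. exfalso.
        assert (v b < v a) by (destruct HV as [_ [_ Hm]]; apply Hm; lra).
        unfold u in Hu. rewrite Hvsj, Hvj in Hu. fold G l a in Hu. lra. }
      assert (HPQ : a * v' a <= b * v' b) by (apply HV3; lra).
      assert (HQ : b * v' b <= 0).
      { rewrite <- (Rmult_0_r b). apply Rmult_le_compat_l; [lra|]. apply (vp_nonpos v); auto; lra. }
      replace (a*u*(l - t*a*u) + a*((a*v' a)*(t*a*u)) + -a*((b*v' b)*(t*b*u')))
        with (a*u*(l - t*a*u) + a*((a*v' a)*(t*a*u) - (b*v' b)*(t*b*u'))) by ring.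
      apply sign1; auto.
    - replace (a*u*(l - t*a*u) + a*((a*v' a)*(t*a*u)) + l*t*a*0)
        with (a*u*(l - t*a*u) + a*((a*v' a)*(t*a*u) - 0*0)) by ring.
      apply sign1; lra. }
  destruct (Rle_or_lt (dwf v v' vmax L n x j t) 0) as [h|h]; auto.
  assert (0 < l * dwf v v' vmax L n x j t) by (apply Rmult_lt_0_compat; lra). lra.
Qed.

Lemma small_lem v v' vmax L n xb x : V1 v v' -> V2 v vmax -> 0 < L ->
  FtL_solution v vmax L n xb x ->
  forall j, (j < Nn n)%nat ->
  exists delta, 0 < delta /\ forall s, 0 < s < delta -> wf v vmax L n x j s < elln L n.
Proof.
  intros HV HV2 HL H j Hj.
  assert (Hl : 0 < elln L n) by (unfold elln; apply Rdiv_lt_0_compat; [lra|apply pow_lt; lra]).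
  destruct H as [H0 [Ho [Hc _]]].
  set (l := elln L n) in *.
  set (G0 := x (S j) 0 - x j 0).
  assert (HG0 : 0 < G0) by (unfold G0; specialize (Ho j Hj 0 ltac:(lra)); lra).
  destruct (Hc j ltac:(lia) (G0/4) ltac:(lra)) as [d1 [Hd1 Hc1]].
  destruct (Hc (S j) ltac:(lia) (G0/4) ltac:(lra)) as [d2 [Hd2 Hc2]].
  set (A := 2*l/G0).
  assert (HA : 0 < A) by (unfold A; apply Rdiv_lt_0_compat; lra).
  set (K := vmax - v A).
  assert (HK : 0 <= K) by (unfold K; rewrite <- HV2; pose proof (v_anti v v' 0 A HV); lra).
  assert (HK1 : 0 < A*K+1) by nra.
  exists (Rmin (Rmin d1 d2) (l/(A*K+1))).
  split. { apply Rmin_glb_lt; [apply Rmin_glb_lt|apply Rdiv_lt_0_compat]; lra. }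
  intros s [Hs1 Hs2].
  assert (s < d1) by (eapply Rlt_le_trans; [exact Hs2|]; eapply Rle_trans; [apply Rmin_l|apply Rmin_l]).
  assert (s < d2) by (eapply Rlt_le_trans; [exact Hs2|]; eapply Rle_trans; [apply Rmin_l|apply Rmin_r]).
  assert (Hs3 : s < l/(A*K+1)) by (eapply Rlt_le_trans; [exact Hs2|]; apply Rmin_r).
  specialize (Hc1 s ltac:(lra)). specialize (Hc2 s ltac:(lra)).
  apply Rabs_def2 in Hc1. apply Rabs_def2 in Hc2.
  destruct Hc1 as [Hc1a Hc1b]. destruct Hc2 as [Hc2a Hc2b].
  set (g := x (S j) s - x j s).
  assert (Hg : G0/2 <= g) by (unfold g, G0 in *; lra).
  set (a := l / g).
  assert (Ha : 0 < a) by (apply Rdiv_lt_0_compat; lra).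
  assert (HaA : a <= A).
  { assert (/g <= /(G0/2)) by (apply Rinv_le_contravar; lra).
    replace A with (l * /(G0/2)) by (unfold A; field; lra).
    unfold a, Rdiv. apply Rmult_le_compat_l; lra. }
  assert (Hvj : Vf v vmax L n x j s = v a).
  { unfold Vf. destruct (Nat.ltb_spec j (Nn n)); [reflexivity|lia]. }
  assert (Hvsj : Vf v vmax L n x (S j) s <= vmax).
  { unfold Vf. destruct (Nat.ltb_spec (S j) (Nn n)) as [h|h]; [|lra].
    rewrite <- HV2. apply (v_anti v v'); auto; [lra|].
    left. apply ypos; auto. apply Ho; auto; lra. }
  assert (HvA : v A <= v a) by (apply (v_anti v v'); auto; lra).
  set (u := Vf v vmax L n x (S j) s - Vf v vmax L n x j s).
  assert (Hu : u <= K) by (unfold u, K; lra).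
  assert (Hw : wf v vmax L n x j s = s * a * u) by reflexivity.
  rewrite Hw.
  destruct (Rle_or_lt u 0) as [h|h].
  - assert (s*a*u <= 0); [|lra].
    rewrite <- (Rmult_0_r (s*a)). apply Rmult_le_compat_l; [|lra]. nra.
  - assert (s*a*u <= s*A*K).
    { apply Rmult_le_compat; try nra. }
    assert (s*(A*K+1) < l).
    { apply (Rmult_lt_compat_r (A*K+1)) in Hs3; [|lra].
      unfold Rdiv in Hs3. rewrite Rmult_assoc, Rinv_l in Hs3; lra. }
    nra.
Qed.

Lemma stepQ v v' vmax L n xb x : V1 v v' -> V2 v vmax -> V3 v' -> 0 < L ->
  FtL_solution v vmax L n xb x ->
  forall j, (j < Nn n)%nat ->
  ((S j < Nn n)%nat -> forall t, 0 <= t -> wf v vmax L n x (S j) t <= elln L n) ->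
  forall t, 0 <= t -> wf v vmax L n x j t <= elln L n.
Proof.
  intros HV HV2 HV3 HL H j Hj IH t [Ht| <-].
  - assert (Hl : 0 < elln L n) by (unfold elln; apply Rdiv_lt_0_compat; [lra|apply pow_lt; lra]).
    apply (cmp_lemma (wf v vmax L n x j) (dwf v v' vmax L n x j) (elln L n) Hl); auto.
    + intros s Hs. apply (dw_lem _ _ _ _ _ _ _ HV HL H); auto.
    + intros s Hs Hw. apply (dw_sign _ _ _ _ _ _ _ HV HV2 HV3 HL H j Hj IH s Hs Hw).
    + apply (small_lem _ _ _ _ _ _ _ HV HV2 HL H j Hj).
  - unfold wf. rewrite !Rmult_0_l. unfold elln. left.
    apply Rdiv_lt_0_compat; [lra|apply pow_lt; lra].
Qed.

Lemma allQ v v' vmax L n xb x : V1 v v' -> V2 v vmax -> V3 v' -> 0 < L ->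
  FtL_solution v vmax L n xb x ->
  forall k j, (j + k = Nn n - 1)%nat -> (j < Nn n)%nat ->
  forall t, 0 <= t -> wf v vmax L n x j t <= elln L n.
Proof.
  intros HV HV2 HV3 HL H k. induction k as [|k IHk]; intros j Hjk Hj.
  - apply (stepQ _ _ _ _ _ _ _ HV HV2 HV3 HL H j Hj). intros; lia.
  - apply (stepQ _ _ _ _ _ _ _ HV HV2 HV3 HL H j Hj). intros hs.
    apply IHk; lia.
Qed.

Theorem lemma3p9 (v v' : R -> R) (vmax L : R) (F : R -> R) (xmin : R)
  (HV1 : V1 v v') (HV2 : V2 v vmax) (HV3 : V3 v')
  (HIn : In_cdf F L) (Hxmin : is_min_supp F xmin) :
  forall (n : nat) (xb : nat -> R) (x : nat -> R -> R),
    initial_positions F L xmin n xb ->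
    FtL_solution v vmax L n xb x ->
    forall (i : nat), (i + 2 <= Nn n)%nat ->
    forall t, 0 <= t ->
      t * ydens L n x i t * (v (ydens L n x (S i) t) - v (ydens L n x i t))
        <= elln L n.
Proof.
  intros n xb x _ H i Hi t Ht.
  destruct HIn as [HL _].
  pose proof (allQ _ _ _ _ _ _ _ HV1 HV2 HV3 HL H (Nn n - 1 - i) i ltac:(lia) ltac:(lia) t Ht) as Q.
  unfold wf, Vf in Q.
  destruct (Nat.ltb_spec (S i) (Nn n)); [|lia].
  destruct (Nat.ltb_spec i (Nn n)); [|lia].
  exact Q.
Qed.
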